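(* Let $D$ be a non-commutative division ring with center $F$ and let $M$ be a maximal subgroup of $D^*$. If $M$ is abelian, then $M\cup\{0\}$ is a maximal subfield of $D$; that is, $M=K^*$ for some maximal subfield $K$ of $D$.
   Context: $D^*$ is the multiplicative group of $D$; maximal subgroup = proper subgroup maximal among proper subgroups. A maximal subfield of $D$ is a subfield not properly contained in another subfield. *)

(* Defs.v *)
From HB Require Import structures.
From mathcomp Require Import all_boot all_order all_algebra.
Set Implicit Arguments. Unset Strict Implicit. Unset Printing Implicit Defensive.
Import GRing.Theory.
Local Open Scope ring_scope.

Definition is_division_ring (D : unitRingType) : Prop :=
  forall x : D, x != 0 -> x \is a GRing.unit.

Definition is_subgroup_units (D : unitRingType) (S : D -> Prop) : Prop :=
  [/\ forall x, S x -> x != 0,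
      S 1,
      forall x y, S x -> S y -> S (x * y)
    & forall x, S x -> S x^-1].

Definition is_maximal_subgroup_units (D : unitRingType) (M : D -> Prop) : Prop :=
  [/\ is_subgroup_units M,
      (exists x : D, x != 0 /\ ~ M x)
    & forall N : D -> Prop, is_subgroup_units N -> (forall x, M x -> N x) ->
        (exists x : D, x != 0 /\ ~ N x) -> forall x, N x -> M x].

Definition is_abelian (D : unitRingType) (M : D -> Prop) : Prop :=
  forall x y, M x -> M y -> x * y = y * x.

Definition is_subfield (D : unitRingType) (K : D -> Prop) : Prop :=
  [/\ K 0 /\ K 1,
      forall x y, K x -> K y -> K (x - y),
      forall x y, K x -> K y -> K (x * y),
      forall x, K x -> x != 0 -> K x^-1
    & forall x y, K x -> K y -> x * y = y * x].

Definition is_maximal_subfield (D : unitRingType) (K : D -> Prop) : Prop :=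
  is_subfield K /\
  forall L : D -> Prop, is_subfield L -> (forall x, K x -> L x) -> forall x, L x -> K x.

(* Main.v *)
Require Import Defs.
From HB Require Import structures.
From mathcomp Require Import all_boot all_order all_algebra.
From Stdlib Require Import Classical.
Import GRing.Theory.
Local Open Scope ring_scope.

Lemma unit_neq0 (D : unitRingType) (u : D) : u \is a GRing.unit -> u != 0.
Proof. by apply: contraTneq => ->; rewrite unitr0. Qed.

Lemma centr_subgroup (D : unitRingType) (P : D -> Prop) :
  is_division_ring D ->
  is_subgroup_units (fun y => y != 0 /\ forall m, P m -> y * m = m * y).
Proof.
move=> dD; split.
- by move=> x [].
- by split; [exact: oner_neq0 | move=> m _; rewrite mul1r mulr1].
- move=> x y [x0 hx] [y0 hy]; split.
    apply: unit_neq0; rewrite unitrMr; [exact: dD | exact: dD].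
  by move=> m Pm; rewrite -mulrA hy // mulrA hx // mulrA.
- move=> x [x0 hx]; split.
    apply: unit_neq0; rewrite unitrV; exact: dD.
  move=> m Pm; move: (commrV (esym (hx m Pm))); by rewrite /GRing.comm => ->.
Qed.

Theorem proposition2p2 (D : unitRingType) (M : D -> Prop) :
  is_division_ring D ->
  (exists x y : D, x * y != y * x) ->
  is_maximal_subgroup_units M ->
  is_abelian M ->
  exists K : D -> Prop, is_maximal_subfield K /\ (forall x : D, M x <-> (K x /\ x != 0)).
Proof.
move=> dD [a [b nab]] [sgM [z [z0 nMz]] maxM] abM.
have [Mn0 M1 MM MV] := sgM.
pose K := fun y : D => forall m, M m -> y * m = m * y.
have CM : forall y, y != 0 -> K y -> M y.
  move=> y y0 Ky.
  have sub : forall x, M x -> x != 0 /\ K x.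
    by move=> x Mx; split; [exact: Mn0 | move=> m Mm; exact: abM].
  have [prop|nprop] := classic (exists x : D, x != 0 /\ ~ (x != 0 /\ K x)).
    exact: (maxM _ (@centr_subgroup D M dD) sub prop y (conj y0 Ky)).
  exfalso.
  have Kall : forall x, x != 0 -> K x.
    move=> x x0; apply: NNPP => nK; apply: nprop; exists x; split => //.
    by case.
  have central : forall x w : D, x != 0 -> x * w = w * x.
    move=> x w x0.
    have [->|w0] := eqVneq w 0; first by rewrite mulr0 mul0r.
    have [Mw|nMw] := classic (M w); first by apply: (Kall x x0).
    pose P := fun t : D => t == w.
    have sub2 : forall t, M t -> t != 0 /\ (forall m, P m -> t * m = m * t).
      move=> t Mt; split; first exact: Mn0.
      move=> m /eqP ->; symmetry; exact: (Kall w w0).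
    have [prop2|nprop2] := classic (exists t : D, t != 0 /\ ~ (t != 0 /\ (forall m, P m -> t * m = m * t))).
      exfalso; apply: nMw; apply: (maxM _ (@centr_subgroup D P dD) sub2 prop2).
      by split => // m /eqP ->.
    apply: NNPP => ne; apply: nprop2; exists x; split => //; case=> _ h.
    exact: (ne (h w (eqxx w))).
  have a0 : a != 0 by apply: contraNneq nab => ->; rewrite mulr0 mul0r.
  by move/eqP: nab; apply; apply: central.
have Kf : is_subfield K.
  split.
  - by split => m _; rewrite ?mulr0 ?mul0r ?mulr1 ?mul1r.
  - by move=> x y hx hy m Mm; rewrite mulrBl mulrBr hx // hy.
  - by move=> x y hx hy m Mm; rewrite -mulrA hy // mulrA hx // mulrA.
  - move=> x hx _ m Mm; move: (commrV (esym (hx m Mm))); by rewrite /GRing.comm => ->.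
  - move=> x y hx hy.
    have [->|x0] := eqVneq x 0; first by rewrite mulr0 mul0r.
    by symmetry; apply: hy; apply: CM.
have MK : forall x, M x <-> K x /\ x != 0.
  move=> x; split; last by case=> kx x0; exact: CM.
  by move=> Mx; split; [move=> m Mm; exact: abM | exact: Mn0].
exists K; split => //; split => // L [_ _ _ _ cL] KL x Lx m Mm.
apply: cL => //; apply: KL; exact: (proj1 (MK m) Mm).1.
Qed.
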